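(* Let $f_{SN_1}(x)=\sqrt{\frac{x^2+1}{2}}-\left(\frac{\sqrt x+1}{2}\right)^2$ for $x\in(0,\infty)$, let $f_{SN_1}^*(u)=u\,f_{SN_1}\!\left(\frac{1-u}{u}\right)$ for $u\in(0,1)$, extended by continuity to $[0,1]$ (explicitly $f_{SN_1}^*(u)=\frac{\sqrt2}{2}\sqrt{u^2+(1-u)^2}-\frac14\left(1+2\sqrt{u(1-u)}\right)$), and define $\overline M_{SN_1}(C_1,C_2)=E_X\{f_{SN_1}^*(P(C_2\mid x))\}$. Then $$P_e\le \frac12\left[1-\frac{4}{2\sqrt2-1}\,\overline M_{SN_1}(C_1,C_2)\right].$$
   Context: Two-class decision problem: classes $C_1,C_2$, an observation $x$ in a space $\mathrm X$ with density $p(x)$, and a posteriori probabilities $P(C_1\mid x),P(C_2\mid x)\ge0$ with $P(C_1\mid x)+P(C_2\mid x)=1$. $E_X\{g(x)\}=\int_{\mathrm X} g(x)p(x)\,dx$. $P_e=E_X\{\min(P(C_1\mid x),P(C_2\mid x))\}$ is the Bayesian probability of error. *)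

(* Defs.v *)
From HB Require Import structures.
From mathcomp Require Import all_boot all_order all_algebra.
From mathcomp Require Import all_classical all_reals all_analysis.
Set Implicit Arguments. Unset Strict Implicit. Unset Printing Implicit Defensive.
Import Order.TTheory GRing.Theory Num.Theory.
Local Open Scope ring_scope.

Definition fSN1 {R : realType} (x : R) : R :=
  Num.sqrt ((x ^+ 2 + 1) / 2) - ((Num.sqrt x + 1) / 2) ^+ 2.

(* f*_{SN_1}(u) = u f_{SN_1}((1-u)/u) on (0,1), extended by continuity to
   [0,1]: the limit at both endpoints is sqrt2/2 - 1/4. *)
Definition fSN1star {R : realType} (u : R) : R :=
  if (0 < u) && (u < 1) then u * fSN1 ((1 - u) / u)
  else Num.sqrt 2 / 2 - 1 / 4.

Definition EX {d : measure_display} {T : measurableType d} {R : realType}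
  (mu : {measure set T -> \bar R}) (p : T -> R) (g : T -> R) : R :=
  Rintegral mu setT (fun x => g x * p x).

(* Bayesian probability of error; P(C1|x) = P1 x, P(C2|x) = P2 x *)
Definition Pe {d : measure_display} {T : measurableType d} {R : realType}
  (mu : {measure set T -> \bar R}) (p P1 P2 : T -> R) : R :=
  EX mu p (fun x => Order.min (P1 x) (P2 x)).

Definition MbarSN1 {d : measure_display} {T : measurableType d} {R : realType}
  (mu : {measure set T -> \bar R}) (p P2 : T -> R) : R :=
  EX mu p (fun x => fSN1star (P2 x)).

(* Main.v *)
Require Import Defs.
From HB Require Import structures.
From mathcomp Require Import all_boot all_order all_algebra.
From mathcomp Require Import all_classical all_reals all_analysis.
From mathcomp Require Import measurable_realfun.
From mathcomp Require Import ring lra.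
Import Order.TTheory GRing.Theory Num.Theory.
Local Open Scope ring_scope.

Lemma key (R : realType) (x y r S : R) : 0 <= x -> x <= y ->
  r^+2 = 2 -> 0 <= r -> 0 <= S -> S^+2 = (x^+4 + y^+4)/2 ->
  2 * S <= r*(y^+2 - x^+2) + x^+2 + x*y.
Proof.
move=> x0 xy hr r0 S0 hS.
have r1 : 1 <= r by nra.
have yx2 : 0 <= y^+2 - x^+2 by nra.
have Q0 : 0 <= r*(y^+2 - x^+2) + x^+2 + x*y.
  have : 0 <= r*(y^+2 - x^+2) by apply: mulr_ge0.
  have : 0 <= x * y by nra.
  nra.
have sq : (2*S)^+2 <= (r*(y^+2 - x^+2) + x^+2 + x*y)^+2.
  have e0 : (r*(y^+2 - x^+2) + x^+2 + x*y)^+2 - 2 * (x^+4 + y^+4) -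
     x*(y-x)*(2*r*(x+y)^+2 - x*(3*y+x)) = (r^+2 - 2) * (y^+2-x^+2)^+2 by ring.
  rewrite hr subrr mul0r in e0.
  have e1 : (2*S)^+2 = 2 * (x^+4 + y^+4) by rewrite exprMn hS; field.
  have : 0 <= x*(y-x)*(2*r*(x+y)^+2 - x*(3*y+x)).
    apply: mulr_ge0; first nra.
    have h2 : (x+y)^+2 <= r*(x+y)^+2.
      by rewrite -{1}(mul1r ((x+y)^+2)); apply: ler_wpM2r; nra.
    nra.
  lra.
nra.
Qed.

Definition gS {R : realType} (u : R) : R :=
  Num.sqrt ((u^+2 + (1-u)^+2)/2) - (1 + 2 * Num.sqrt (u*(1-u)))/4.

Lemma sqrt_half (R : realType) : Num.sqrt (1/2 : R) = Num.sqrt 2 / 2.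
Proof.
have h : Num.sqrt 2 * Num.sqrt (1/2 : R) = 1.
  by rewrite -sqrtrM // (_ : 2 * (1/2) = (1:R)) ?sqrtr1 //; lra.
have s2 : Num.sqrt (2:R) ^+ 2 = 2 by rewrite sqr_sqrtr.
nra.
Qed.

Lemma fstar_eq (R : realType) (u : R) : 0 <= u <= 1 -> fSN1star u = gS u.
Proof.
case/andP=> u0 u1; rewrite /fSN1star /gS.
case: ifP => [/andP[up ul] | hn].
- rewrite /fSN1. set v := (1-u)/u.
  have un : u != 0 by rewrite gt_eqF.
  have uv : u * v = 1 - u by rewrite /v; field.
  have v0 : 0 <= v by rewrite /v divr_ge0 //; lra.
  have su : Num.sqrt (u^+2) = u by rewrite sqrtr_sqr ger0_norm.
  have e1 : u * Num.sqrt ((v^+2+1)/2) = Num.sqrt ((u^+2 + (1-u)^+2)/2).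
    by rewrite -{1}su -(sqrtrM _ (sqr_ge0 u)); congr Num.sqrt; rewrite -uv; field.
  have e2 : Num.sqrt (u*(1-u)) = u * Num.sqrt v.
    by rewrite -uv mulrA -expr2 sqrtrM ?sqr_ge0 // su.
  rewrite mulrBr e1 e2.
  have hv : Num.sqrt v ^+2 = v by rewrite sqr_sqrtr.
  congr (_ - _).
  rewrite (_ : u * ((Num.sqrt v + 1)/2)^+2 =
     (u * Num.sqrt v ^+2 + 2*(u*Num.sqrt v) + u)/4); last by field.
  by rewrite hv uv; congr (_ / _); ring.
- have [->|u0'] := eqVneq u 0.
    rewrite expr0n /= subr0 expr1n add0r mul0r sqrtr0 mulr0 addr0 sqrt_half.
    by [].
  have u1' : u = 1.
    have up : 0 < u by rewrite lt_neqAle eq_sym u0' u0.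
    move: hn; rewrite up /= => /negbT; rewrite -leNgt => h.
    by apply/eqP; rewrite eq_le u1 h.
  rewrite u1' subrr expr0n /= expr1n addr0 mulr0 sqrtr0 mulr0 addr0 sqrt_half.
  by [].
Qed.

Lemma pw_half (R : realType) (u : R) : 0 <= u -> u <= 1/2 ->
  u + 2 / (2 * Num.sqrt 2 - 1) * gS u <= 1/2.
Proof.
move=> u0 uh.
set r := Num.sqrt (2:R).
have r2 : r^+2 = 2 by rewrite sqr_sqrtr.
have r0 : 0 <= r := sqrtr_ge0 _.
have k0 : 0 < 2 * r - 1 by nra.
set x := Num.sqrt u. set y := Num.sqrt (1-u).
have x2 : x^+2 = u by rewrite sqr_sqrtr.
have y2 : y^+2 = 1-u by rewrite sqr_sqrtr // subr_ge0; lra.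
have xy : x <= y by rewrite ler_sqrt; lra.
have x0 : 0 <= x := sqrtr_ge0 _.
have exy : Num.sqrt (u*(1-u)) = x*y by rewrite sqrtrM.
set S := Num.sqrt ((u^+2 + (1-u)^+2)/2).
have S0 : 0 <= S := sqrtr_ge0 _.
have S2 : S^+2 = (x^+4 + y^+4)/2.
  rewrite sqr_sqrtr; last by apply: divr_ge0 => //; apply: addr_ge0; apply: sqr_ge0.
  by rewrite -y2 -x2 -!exprM.
have K := @key R x y r S x0 xy r2 r0 S0 S2.
rewrite x2 y2 in K.
rewrite /gS -/S exy.
have : 2 / (2 * r - 1) * (S - (1 + 2 * (x * y)) / 4) <= 1/2 - u.
  rewrite mulrAC ler_pdivrMr //; nra.
lra.
Qed.

Lemma gS_sym (R : realType) (u : R) : gS (1 - u) = gS u.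
Proof.
have e : 1 - (1 - u) = u by ring.
rewrite /gS e.
by rewrite (addrC ((1-u)^+2)) (mulrC (1-u)).
Qed.

Lemma pw (R : realType) (u : R) : 0 <= u <= 1 ->
  Order.min (1 - u) u + 2 / (2 * Num.sqrt 2 - 1) * gS u <= 1/2.
Proof.
case/andP=> u0 u1.
have [h|h] := leP u (1/2).
- rewrite min_r; last lra.
  exact: pw_half.
- rewrite min_l; last lra.
  rewrite -gS_sym; apply: pw_half; lra.
Qed.

Lemma gS_bound (R : realType) (u : R) : 0 <= u <= 1 -> `|gS u| <= 1.
Proof.
case/andP=> u0 u1.
rewrite /gS.
set S := Num.sqrt _. set B := Num.sqrt _.
have S0 : 0 <= S := sqrtr_ge0 _.
have B0 : 0 <= B := sqrtr_ge0 _.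
have S2 : S^+2 = (u^+2 + (1-u)^+2)/2.
  by rewrite sqr_sqrtr; last by apply: divr_ge0 => //; apply: addr_ge0; apply: sqr_ge0.
have B2 : B^+2 = u * (1-u) by rewrite sqr_sqrtr //; apply: mulr_ge0; lra.
have S1 : S <= 1 by nra.
have B1 : B <= 1 by nra.
rewrite ler_norml; apply/andP; split; lra.
Qed.

Theorem mainTheorem4 (d : measure_display) (T : measurableType d) (R : realType)
  (mu : {measure set T -> \bar R}) (p P1 P2 : T -> R)
  (p_meas : measurable_fun setT p) (p_ge0 : forall x, 0 <= p x)
  (p_norm : (\int[mu]_x (p x)%:E = 1)%E)
  (P1_meas : measurable_fun setT P1) (P2_meas : measurable_fun setT P2)
  (P1_ge0 : forall x, 0 <= P1 x) (P2_ge0 : forall x, 0 <= P2 x)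
  (P12 : forall x, P1 x + P2 x = 1) :
  Pe mu p P1 P2 <=
    (1 / 2) * (1 - 4 / (2 * Num.sqrt 2 - 1) * MbarSN1 mu p P2).
Proof.
set r := Num.sqrt (2:R).
have r2 : r^+2 = 2 by rewrite sqr_sqrtr.
have r0 : 0 <= r := sqrtr_ge0 _.
have k0 : 0 < 2 * r - 1 by nra.
set c := 2 / (2 * r - 1).
have c0 : 0 <= c by rewrite /c divr_ge0 //; lra.
have P2_01 : forall x, 0 <= P2 x <= 1.
  by move=> x; rewrite P2_ge0 /=; have:=P12 x; have:=P1_ge0 x; lra.
have P1E : forall x, P1 x = 1 - P2 x by move=> x; have:=P12 x; lra.
have ip : mu.-integrable setT (EFin \o p).
  apply/integrableP; split; first exact/measurable_EFinP.
  under eq_integral => x _ do rewrite abse_EFin ger0_norm //.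
  by rewrite p_norm ltry.
have intb : forall (K : R) (f : T -> R), measurable_fun setT f ->
    (forall x, `|f x| <= K) ->
    mu.-integrable setT (EFin \o (fun x => f x * p x)).
  move=> K f mf fb.
  apply: (le_integrable _ _ _ (integrableZl _ K ip)) => //.
  - apply/measurable_EFinP; exact: measurable_funM.
  - move=> x _ /=; rewrite lee_fin !normrM (ger0_norm (p_ge0 x)).
    have K0 : 0 <= K by apply: le_trans (fb x).
    by rewrite (ger0_norm K0); apply: ler_wpM2r.
have mgS : measurable_fun setT (@gS R).
  rewrite /gS; apply: measurable_funB.
  - apply: measurableT_comp; first exact: continuous_measurable_fun (@sqrt_continuous R).
    apply: measurable_funM; last exact: measurable_cst.
    apply: measurable_funD; first exact: measurable_funX.
    apply: measurable_funX; apply: measurable_funB => //; exact: measurable_cst.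
  - apply: measurable_funM; last exact: measurable_cst.
    apply: measurable_funD; first exact: measurable_cst.
    apply: measurable_funM; first exact: measurable_cst.
    apply: measurableT_comp; first exact: continuous_measurable_fun (@sqrt_continuous R).
    apply: measurable_funM => //; apply: measurable_funB => //; exact: measurable_cst.
have fsE : (fun x => fSN1star (P2 x)) = gS \o P2.
  by apply/funext => x; rewrite /= fstar_eq.
have mfs : measurable_fun setT (fun x => fSN1star (P2 x)).
  by rewrite fsE; exact: measurableT_comp.
have mmin : measurable_fun setT (fun x => Order.min (P1 x) (P2 x)).
  exact: measurable_minr.
have bmin : forall x, `|Order.min (P1 x) (P2 x)| <= 1.
  move=> x; rewrite P1E; have := P2_01 x => /andP[h1 h2].
  have [h|h] := leP (1 - P2 x) (P2 x).
  - rewrite ger0_norm; lra.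
  - rewrite ger0_norm; lra.
have bfs : forall x, `|fSN1star (P2 x)| <= 1.
  by move=> x; rewrite fstar_eq ?gS_bound.
have iA := intb _ _ mmin bmin.
have iB := intb _ _ mfs bfs.
have hle : \int[mu]_(x in setT)
      ((Order.min (P1 x) (P2 x) + c * fSN1star (P2 x)) * p x)
    <= \int[mu]_(x in setT) ((1/2 : R) * p x).
  apply: le_Rintegral => //.
  - apply: (intb (1 + c * 1)).
      apply: measurable_funD => //; apply: measurable_funM => //; exact: measurable_cst.
    move=> x; apply: le_trans (ler_normD _ _) _; apply: lerD => //.
    by rewrite normrM (ger0_norm c0); apply: ler_wpM2l.
  - apply: (intb (1/2) (fun _ => 1/2)); first exact: measurable_cst.
    by move=> _; rewrite ger0_norm.
  - move=> x _; apply: ler_wpM2r => //.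
    rewrite P1E fstar_eq //; exact: pw.
have eL : \int[mu]_(x in setT)
      ((Order.min (P1 x) (P2 x) + c * fSN1star (P2 x)) * p x)
    = Pe mu p P1 P2 + c * MbarSN1 mu p P2.
  rewrite /Pe /MbarSN1 /EX -RintegralZl //.
  rewrite -RintegralD //; last first.
    apply: (integrableZl _ c iB) => //.
  by apply: eq_Rintegral => x _; rewrite mulrDl mulrA.
have eR : \int[mu]_(x in setT) ((1/2 : R) * p x) = 1/2.
  by rewrite RintegralZl // /Rintegral p_norm /= mulr1.
rewrite eL eR in hle.
have -> : 1 / 2 * (1 - 4 / (2 * r - 1) * MbarSN1 mu p P2) =
   1/2 - c * MbarSN1 mu p P2.
  by rewrite /c; field; rewrite gt_eqF.
lra.
Qed.
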